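(* Let $\Gamma$ and the data $s_0,\eta_0,\Xi$ be as in the context. There exists $t_0>0$ such that for every $\mathbf x\in\mathbb R^{n-1}$ and every $t>t_0$: if $u(\mathbf x)\sigma a(t)=\gamma\xi na(s)k$ with $\gamma\in\Gamma$, $\xi\in\Xi$, $n\in N$, $s>s_0$ and $k\in K$, then $\gamma\xi\notin P$.
   Context: $n\ge2$, $G=\mathrm{SO}(n,1)$, $K\cong\mathrm{SO}(n)$ maximal compact. $A=\{a(t)\}$ a one-parameter $\mathbb R$-split torus with $\mathfrak g=\mathfrak g_{-1}\oplus\mathfrak z(A)\oplus\mathfrak g_{+1}$, $\mathrm{Ad}(a(t))=e^{\pm t}$ on $\mathfrak g_{\pm1}$; $M=Z_G(A)\cap K$, $N=\exp\mathfrak g_{+1}$, $\mathfrak g_{+1}\cong\mathbb R^{n-1}$, $u(\mathbf x)=\exp\mathbf x$; $\sigma\in K$ with $\sigma^2=e$, $\sigma a(t)\sigma^{-1}=a(-t)$; $P=MAN$. For compact $\eta\subset N$: $A_s=\{a(t):t\ge s\}$, $\Omega(\eta,s)=\eta A_sK$. $\Gamma\subset G$ discrete, $\Gamma\backslash G$ of finite volume, $\Gamma\backslash\mathbb H^n$ non-compact, with fixed $s_0>0$, compact $\eta_0\subset N$, finite $\Xi\subset G$, $e\in\Xi$, satisfying: (i) $G=\Gamma\Xi\Omega(\eta_0,s_0)$; (ii) $\Gamma\cap\xi N\xi^{-1}$ is a cocompact lattice in $\xi N\xi^{-1}$; (iii) for compact $\eta\subset N$, $\{\gamma:\gamma\Xi\Omega(\eta,s_0)\cap\Omega(\eta,s_0)\neq\emptyset\}$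 is finite; (iv) for each compact $\eta\supseteq\eta_0$ there is $s_1>s_0$ with: $\gamma\xi_1\Omega(\eta,s_0)\cap\xi_2\Omega(\eta,s_1)\neq\emptyset$ implies $\xi_1=\xi_2$, $\gamma\in\xi_1NM\xi_1^{-1}$. *)

(* Defs.v *)
From HB Require Import structures.
From mathcomp Require Import all_boot all_order all_algebra.
From mathcomp Require Import all_classical all_reals all_analysis.
Set Implicit Arguments. Unset Strict Implicit. Unset Printing Implicit Defensive.
Import Order.TTheory GRing.Theory Num.Theory.
Import numFieldTopology.Exports numFieldNormedType.Exports.
Local Open Scope classical_set_scope.
Local Open Scope ring_scope.

Section SOn1.
Variables (R : realType) (n : nat).

Definition Mat := 'M[R]_(n.+1).
(* coordinates 0..n-2 : horizontal, n-1 : the A-direction, n (= ord_max) : timelike *)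
Definition iA : 'I_(n.+1) := inord n.-1.

Definition Jf : Mat := \matrix_(i, j) (if i == j then (if i == ord_max then -1 else 1) else 0).

(* G = SO_0(n,1): preserves the form, det 1, preserves the future cone *)
Definition Gset : set Mat :=
  [set g | g^T *m Jf *m g = Jf /\ \det g = 1 /\ 0 < g ord_max ord_max].

Definition e_n : 'cV[R]_(n.+1) := \col_i (if i == ord_max then 1 else 0).

(* K = stabiliser in G of the base point e_n of the hyperboloid model, K ~ SO(n) *)
Definition Kset : set Mat := [set k | Gset k /\ k *m e_n = e_n].

Definition coshR (t : R) : R := (expR t + expR (- t)) / 2.
Definition sinhR (t : R) : R := (expR t - expR (- t)) / 2.

Definition a_ (t : R) : Mat := \matrix_(i, j)
  (if (i == iA) && (j == iA) then coshR t
   else if (i == iA) && (j == ord_max) then sinhR t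
   else if (i == ord_max) && (j == iA) then sinhR t
   else if (i == ord_max) && (j == ord_max) then coshR t
   else if i == j then 1 else 0).

(* f+ = e_{n-1} + e_n, eigenvector of a(t) with eigenvalue e^t *)
Definition fplus : 'cV[R]_(n.+1) :=
  \col_i (if (i == iA) || (i == ord_max) then 1 else 0).

Definition xt (x : 'rV[R]_(n.-1)) : 'cV[R]_(n.+1) :=
  \col_i (odflt 0 (omap (fun j : 'I_(n.-1) => x ord0 j) (insub (val i)))).

(* X_x in g_{+1}: X_x w = B(w, x) f+ - B(w, f+) x ;  X_x^3 = 0 *)
Definition Xn (x : 'rV[R]_(n.-1)) : Mat :=
  fplus *m (xt x)^T *m Jf - xt x *m fplus^T *m Jf.

(* u(x) = exp(X_x) = 1 + X_x + X_x^2 / 2 *)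
Definition u_ (x : 'rV[R]_(n.-1)) : Mat :=
  1%:M + Xn x + (2^-1 : R) *: (Xn x *m Xn x).

Definition Nset : set Mat := [set g | exists x, g = u_ x].

Definition Mset : set Mat :=
  [set m | Gset m /\ Kset m /\ forall t, m *m a_ t = a_ t *m m].

Definition Pset : set Mat :=
  [set p | exists m t x, Mset m /\ p = m *m a_ t *m u_ x].

(* Omega(eta, s) = eta A_s K, eta given as a subset of R^{n-1} ~ N via u *)
Definition Omega (eta : set 'rV[R]_(n.-1)) (s : R) : set Mat :=
  [set g | exists x t k, eta x /\ s <= t /\ Kset k /\ g = u_ x *m a_ t *m k].

Definition is_subgroup (Gam : set Mat) : Prop :=
  Gam `<=` Gset /\ Gam 1%:M /\
  (forall g h, Gam g -> Gam h -> Gam (g *m h)) /\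
  (forall g, Gam g -> Gam (invmx g)).

Definition discrete_mx (Gam : set Mat) : Prop :=
  exists e : R, 0 < e /\ forall g, Gam g ->
    (forall i j, `|g i j - (1%:M : Mat) i j| < e) -> g = 1%:M.

(* Gamma \ G is non-compact (equivalently Gamma \ H^n non-compact):
   no bounded (hence relatively compact) set B of G with G = Gamma B *)
Definition noncompact_quotient (Gam : set Mat) : Prop :=
  ~ exists C : R, forall g, Gset g -> exists gam b, Gam gam /\ Gset b /\
      (forall i j, `|b i j| <= C) /\ g = gam *m b.

End SOn1.

Arguments iA {n}.
Arguments Jf {R n}.
Arguments Gset {R n}.
Arguments e_n {R n}.
Arguments Kset {R n}.
Arguments a_ {R n} t.
Arguments fplus {R n}.
Arguments xt {R n} x.
Arguments Xn {R n} x.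
Arguments u_ {R n} x.
Arguments Nset {R n}.
Arguments Mset {R n}.
Arguments Pset {R n}.
Arguments Omega {R n} eta s.
Arguments is_subgroup {R n} Gam.
Arguments discrete_mx {R n} Gam.
Arguments noncompact_quotient {R n} Gam.

(* Main.v *)
Require Import Defs.
From HB Require Import structures.
From mathcomp Require Import all_boot all_order all_algebra.
From mathcomp Require Import all_classical all_reals all_analysis.
From mathcomp Require Import ring lra.
Import Order.TTheory GRing.Theory Num.Theory.
Import numFieldTopology.Exports numFieldNormedType.Exports.
Local Open Scope classical_set_scope.
Local Open Scope ring_scope.
Section S.
Variables (R : realType) (n : nat).
Hypothesis hn : (0 < n)%N.
Notation M := 'M[R]_(n.+1).
Lemma iA_neq : (iA : 'I_(n.+1)) != ord_max.
Proof. by rewrite -val_eqE /= /iA inordK; case: n hn => // k _ /=; rewrite ltn_eqF. Qed.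
Lemma mul_a m (A : 'M[R]_(m, n.+1)) t i j : (A *m a_ t) i j =
  if j == iA then A i iA * coshR t + A i ord_max * sinhR t
  else if j == ord_max then A i iA * sinhR t + A i ord_max * coshR t
  else A i j.
Proof.
have hne := iA_neq.
rewrite mxE.
have hne' : ord_max != iA :> 'I_(n.+1) by rewrite eq_sym.
case: (eqVneq j iA) => [->|jA].
  rewrite (bigD1 iA) //= (bigD1 ord_max) //= big1 ?addr0.
    by rewrite !mxE !eqxx /= (negbTE hne') /=.
  move=> k /andP[k1 k2]; rewrite mxE.
  by case: eqP k1 => // _ _; case: eqP k2 => // _ _; rewrite /= mulr0.
case: (eqVneq j ord_max) => [->|jM].
  rewrite (bigD1 iA) //= (bigD1 ord_max) //= big1 ?addr0.
    by rewrite !mxE !eqxx /= (negbTE hne') /=.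
  move=> k /andP[k1 k2]; rewrite mxE.
  by case: eqP k1 => // _ _; case: eqP k2 => // _ _; rewrite /= mulr0.
rewrite (bigD1 j) //= big1 ?addr0.
  rewrite !mxE; case: eqP jA => // _ _; case: eqP jM => // _ _.
  by rewrite /= eqxx mulr1.
move=> k kj; rewrite mxE; case: eqP jA => // _ _; case: eqP jM => // _ _.
by rewrite /= !andbF; case: eqP kj => // _ _; rewrite mulr0.
Qed.

Lemma mul_J m (A : 'M[R]_(m, n.+1)) i j :
  (A *m Jf) i j = A i j * (if j == ord_max then -1 else 1).
Proof.
rewrite mxE (bigD1 j) //= big1 ?addr0; first by rewrite mxE eqxx.
by move=> k kj; rewrite mxE; case: eqP kj => // _ _; rewrite mulr0.
Qed.

Lemma mul_en m (A : 'M[R]_(m, n.+1)) i j : (A *m e_n) i j = A i ord_max.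
Proof.
rewrite mxE (bigD1 ord_max) //= big1 ?addr0; first by rewrite mxE eqxx mulr1.
by move=> k kj; rewrite mxE; case: eqP kj => // _ _; rewrite mulr0.
Qed.

Definition rho : 'M[R]_(1, n.+1) := fplus^T *m Jf.

Lemma rhoE i j : rho i j = if j == iA then 1 else if j == ord_max then -1 else 0.
Proof.
rewrite /rho mul_J !mxE.
have hne := iA_neq.
case: (eqVneq j iA) => [->|jA].
  by rewrite /=; case: eqP hne => // _ _; rewrite mulr1.
by rewrite /=; case: eqP => _; rewrite ?mul1r ?mul0r.
Qed.

Lemma rho_mul p (B : 'M[R]_(n.+1, p)) i j : (rho *m B) i j = B iA j - B ord_max j.
Proof.
have hne := iA_neq.
have hne' : ord_max != iA :> 'I_(n.+1) by rewrite eq_sym.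
rewrite mxE (bigD1 iA) //= (bigD1 ord_max) //= big1 ?addr0.
  by rewrite !rhoE eqxx (negbTE hne') eqxx mul1r mulN1r.
by move=> k /andP[k1 k2]; rewrite rhoE (negbTE k1) (negbTE k2) mul0r.
Qed.

Lemma rho_en : (rho *m e_n) 0 0 = -1.
Proof.
rewrite rho_mul !mxE eqxx.
have hne := iA_neq. by case: eqP hne => // _ _; rewrite sub0r.
Qed.

Lemma rho_a t : rho *m a_ t = expR (- t) *: rho.
Proof.
have hne := iA_neq.
have hne' : ord_max != iA :> 'I_(n.+1) by rewrite eq_sym.
apply/matrixP => i j; rewrite mul_a [in RHS]mxE !rhoE eqxx (negbTE hne') eqxx /coshR /sinhR.
case: (eqVneq j iA) => [_|jA]; first by rewrite mulr1; field.
case: (eqVneq j ord_max) => [_|jM]; first by rewrite mulrN1; field.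
by rewrite mulr0.
Qed.

Lemma fplusE i j : (fplus : 'cV[R]_(n.+1)) i j = if (i == iA) || (i == ord_max) then 1 else 0.
Proof. by rewrite mxE. Qed.

Lemma rho_fplus : rho *m fplus = 0.
Proof. by apply/matrixP => i j; rewrite rho_mul !fplusE !eqxx orbT subrr mxE. Qed.

Lemma xt_iA (x : 'rV[R]_(n.-1)) j : xt x iA j = 0.
Proof. rewrite mxE insubF //= /iA inordK ?ltnn //; case: n hn => // k _; rewrite /= leqW. Qed.

Lemma xt_max (x : 'rV[R]_(n.-1)) j : xt x ord_max j = 0.
Proof. by rewrite mxE insubF //= ltnNge leq_pred. Qed.

Lemma rho_xt x : rho *m @xt R n x = 0.
Proof. by apply/matrixP => i j; rewrite rho_mul xt_iA xt_max subrr mxE. Qed.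

Lemma Jf_tr : (Jf : 'M[R]_(n.+1))^T = Jf.
Proof. apply/matrixP => i j; rewrite !mxE eq_sym; case: eqP => // ->. done. Qed.

Lemma X_f x : @Xn R n x *m fplus = 0.
Proof.
rewrite /Xn mulmxBl -!mulmxA.
have h1 : (xt x)^T *m (Jf *m fplus) = (rho *m xt x)^T.
  by rewrite trmx_mul /rho trmx_mul Jf_tr trmxK.
have h2 : (fplus : 'cV[R]_(n.+1))^T *m (Jf *m fplus) = rho *m fplus by rewrite /rho mulmxA.
by rewrite h1 h2 rho_xt rho_fplus trmx0 !mulmx0 subrr.
Qed.

Lemma rho_X x : rho *m @Xn R n x = 0.
Proof.
by rewrite /Xn mulmxBr !mulmxA rho_fplus rho_xt !mul0mx subrr.
Qed.

Lemma rho_u x : rho *m @u_ R n x = rho.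
Proof.
by rewrite /u_ mulmxDr mulmxDr mulmx1 rho_X -scalemxAr mulmxA rho_X mul0mx scaler0 !addr0.
Qed.

Lemma xt_neg (x : 'rV[R]_(n.-1)) : @xt R n (- x) = - xt x.
Proof.
apply/matrixP => i j; rewrite !mxE; case: insub => [k|] /=; first by rewrite mxE.
by rewrite oppr0.
Qed.

Lemma xt0 : @xt R n 0 = 0.
Proof.
apply/matrixP => i j; rewrite !mxE; case: insub => [k|] //=; by rewrite mxE.
Qed.

Lemma Xn_neg x : @Xn R n (- x) = - Xn x.
Proof. by rewrite /Xn xt_neg linearN mulmxN !mulNmx opprB opprK addrC. Qed.

Lemma u0 : @u_ R n 0 = 1%:M.
Proof. by rewrite /u_ /Xn xt0 trmx0 mulmx0 !mul0mx subrr mulmx0 scaler0 !addr0. Qed.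

Lemma XXX x : @Xn R n x *m Xn x *m Xn x = 0.
Proof.
have XX : @Xn R n x *m Xn x = - (Xn x *m xt x) *m rho.
  rewrite {2}/Xn mulmxBr !mulmxA X_f !mul0mx sub0r /rho.
  by rewrite !mulNmx ?mulmxA.
by rewrite XX -mulmxA rho_X mulmx0.
Qed.

Lemma exp_inv (Y : 'M[R]_(n.+1)) : Y *m Y *m Y = 0 ->
  (1%:M + Y + (2^-1 : R) *: (Y *m Y)) *m (1%:M - Y + (2^-1 : R) *: (Y *m Y)) = 1%:M.
Proof.
move=> Y3.
set h : R := 2^-1.
rewrite !mulmxDl !mulmxDr !mul1mx !mulmx1.
rewrite !mulmxN -!scalemxAr -!scalemxAl !mulmxA Y3 mul0mx !scaler0 !subr0 !addr0.
have hA : h *: (Y *m Y) + h *: (Y *m Y) = Y *m Y.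
  rewrite -scalerDl /h.
  have -> : (2^-1 + 2^-1 : R) = 1 by field.
  by rewrite scale1r.
by rewrite addrAC -(addrA _ (h *: _)) addrA -(addrA (1%:M - Y)) hA addrACA subrK subrr addr0.
Qed.

Lemma u_inv x : @u_ R n x *m u_ (- x) = 1%:M.
Proof.
by rewrite /u_ Xn_neg mulNmx mulmxN opprK exp_inv // XXX.
Qed.

Lemma coshD s t : coshR (s + t) = coshR s * coshR t + sinhR s * sinhR t :> R.
Proof. rewrite /coshR /sinhR opprD !expRD. by field. Qed.
Lemma sinhD s t : sinhR (s + t) = sinhR s * coshR t + coshR s * sinhR t :> R.
Proof. rewrite /coshR /sinhR opprD !expRD. by field. Qed.

Lemma iAM : (@iA n == @ord_max n) = false.
Proof. exact/negbTE/iA_neq. Qed.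
Lemma iMA : (@ord_max n == @iA n) = false.
Proof. by rewrite eq_sym iAM. Qed.

Lemma a_add s t : a_ s *m a_ t = a_ (s + t) :> 'M[R]_(n.+1).
Proof.
have E u k l : (a_ u : 'M[R]_(n.+1)) k l = (1%:M *m a_ u) k l by rewrite mul1mx.
apply/matrixP => i j.
rewrite mul_a (E s i iA) (E s i ord_max) (E (s+t) i j) !mul_a !eqxx !iMA coshD sinhD.
set x := (1%:M : 'M[R]_(n.+1)) i iA; set y := (1%:M : 'M[R]_(n.+1)) i ord_max.
case jA: (j == iA); first by ring.
case jM: (j == ord_max); first by ring.
by rewrite E mul_a jA jM.
Qed.

Lemma sinh1_neq0 : sinhR (1 : R) != 0.
Proof.
rewrite /sinhR mulf_neq0 // ?invr_eq0 ?pnatr_eq0 //.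
Qed.


Lemma rho_M (m : 'M[R]_(n.+1)) : (forall t, m *m a_ t = a_ t *m m) -> m *m e_n = e_n ->
  rho *m m = rho.
Proof.
move=> hc he.
set v := rho *m m.
have hv t : v *m a_ t = expR (- t) *: v.
  by rewrite /v -mulmxA hc mulmxA rho_a scalemxAl.
have hvn : v ord0 ord_max = -1.
  by rewrite -(mul_en _ v ord0 ord0) /v -mulmxA he rho_en.
have hv0 : v *m e_n = rho *m e_n by rewrite /v -mulmxA he.
clearbody v.
have h1 := hv 1; have e0 : expR (-1) != 1 :> R by rewrite lt_eqF // expR_lt1 ltrN10.
have hS := sinh1_neq0.
have hvA : v ord0 iA = 1.
  move/matrixP: h1 => /(_ ord0 iA); rewrite mul_a eqxx mxE => h.
  have : sinhR 1 * (v ord0 iA + v ord0 ord_max) = 0.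
    move: h; rewrite /coshR /sinhR => h.
    have -> : (expR 1 - expR (-1)) / 2 * (v ord0 iA + v ord0 ord_max) =
      (v ord0 iA * ((expR 1 + expR (-1)) / 2) + v ord0 ord_max * ((expR 1 - expR (-1)) / 2))
      - expR (-1) * v ord0 iA :> R by field.
    by rewrite h subrr.
  move/eqP; rewrite mulf_eq0 (negbTE hS) /= => /eqP hh.
  by move: hh; rewrite hvn => /eqP; rewrite subr_eq0 => /eqP.
apply/matrixP => i k; rewrite [i]ord1 rhoE.
case: (eqVneq k iA) => [->|kA] //.
case: (eqVneq k ord_max) => [->|kM] //.
move/matrixP: h1 => /(_ ord0 k); rewrite mul_a (negbTE kA) (negbTE kM) mxE => /eqP.
rewrite -subr_eq0 -{1}[v ord0 k]mul1r -mulrBl mulf_eq0 subr_eq0 eq_sym (negbTE e0) /=.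
by move/eqP.
Qed.

Lemma G_unit (g : 'M[R]_(n.+1)) : Gset g -> g \in unitmx.
Proof. by case=> _ [hd _]; rewrite unitmxE hd unitr1. Qed.

Lemma K1 : Kset (1%:M : 'M[R]_(n.+1)).
Proof.
split; last by rewrite mul1mx.
split; first by rewrite trmx1 mul1mx mulmx1.
by split; [rewrite det1 | rewrite mxE eqxx ltr01].
Qed.

Lemma main_aux (sigma : 'M[R]_(n.+1))
  (hsK : Kset sigma)
  (hsa : forall t : R, sigma *m a_ t *m invmx sigma = a_ (- t))
  (Gam : set 'M[R]_(n.+1)) (hGsub : is_subgroup Gam)
  (s0 : R) (eta0 : set 'rV[R]_(n.-1)) (Xi : set 'M[R]_(n.+1))
  (hs0 : 0 < s0) (heta0 : compact eta0)
  (hXiG : Xi `<=` Gset) (hXi1 : Xi 1%:M)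
  (h_ii : forall xi, Xi xi -> exists C : set 'rV[R]_(n.-1), compact C /\
      forall x, exists gam y, Gam gam /\ C y /\
        xi *m u_ x *m invmx xi = gam *m (xi *m u_ y *m invmx xi))
  (h_iv : forall eta : set 'rV[R]_(n.-1), compact eta -> eta0 `<=` eta ->
      exists s1, s0 < s1 /\ forall gam xi1 xi2, Gam gam -> Xi xi1 -> Xi xi2 ->
        (exists w1 w2, Omega eta s0 w1 /\ Omega eta s1 w2 /\
            gam *m xi1 *m w1 = xi2 *m w2) ->
        xi1 = xi2 /\ exists x m, Mset m /\ gam = xi1 *m u_ x *m m *m invmx xi1) :
  exists t0 : R, 0 < t0 /\
    forall (x : 'rV[R]_(n.-1)) (t : R), t0 < t ->
    forall gam xi (y : 'rV[R]_(n.-1)) (s : R) k,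
      Gam gam -> Xi xi -> s0 < s -> Kset k ->
      u_ x *m sigma *m a_ t = gam *m xi *m u_ y *m a_ s *m k ->
      ~ Pset (gam *m xi).
Proof.
have [hGG [hG1 [hGmul hGinv]]] := hGsub.
exists 1; split; first exact: ltr01.
move=> x t ht gam xi y s k hgam hxi hs hk heq [m [tau [z [hm hpg]]]].
have [hmG [hmK hmc]] := hm.
have rho_m : rho *m m = rho := @rho_M m hmc hmK.2.
have rho_p : rho *m (gam *m xi) = expR (- tau) *: rho.
  by rewrite hpg !mulmxA rho_m rho_a -scalemxAl rho_u.
have xiU : xi \in unitmx := @G_unit _ (hXiG _ hxi).
have [C [hC hCx]] := h_ii xi hxi.
have [gam1 [y1 [hgam1 [Cy1 e1]]]] := hCx (- z).
have e2 : xi *m u_ (- z) = gam1 *m (xi *m u_ y1).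
  by rewrite -[LHS](mulmxKV xiU) e1 -!mulmxA (mulVmx xiU) mulmx1.
set gam' := gam *m gam1.
have hgam' : Gam gam' by apply: hGmul.
have g'U : gam' \in unitmx := @G_unit _ (hGG _ hgam').
have hp' : gam' *m (xi *m u_ y1) = m *m a_ tau.
  by rewrite /gam' -mulmxA -e2 mulmxA hpg -mulmxA u_inv mulmx1.
set eta := eta0 `|` [set 0] `|` C.
have heta : compact eta by apply: compactU => //; apply: compactU => //; apply: compact_set1.
have [s1 [hs1 H]] := h_iv eta heta (fun w hw => or_introl (or_introl hw)).
set r := Num.max s1 (s0 - tau).
have hex : exists w1 w2, Omega eta s0 w1 /\ Omega eta s1 w2 /\
    invmx gam' *m 1%:M *m w1 = xi *m w2.
  exists (u_ 0 *m a_ (tau + r) *m m), (u_ y1 *m a_ r *m 1%:M); split; [|split].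
  - exists 0, (tau + r), m; split; first by left; right.
    split; last by split.
    by rewrite addrC -lerBlDr le_max lexx orbT.
  - exists y1, r, 1%:M; split; first by right.
    split; first by rewrite le_max lexx.
    by split; [exact: K1|].
  - rewrite u0 mul1mx !mulmx1 mulmxA -(mulKmx g'U (xi *m u_ y1)) hp'.
    by rewrite -!mulmxA a_add hmc.
have [hxi1 [x' [m' [hm' hg']]]] := H (invmx gam') 1%:M xi (hGinv _ hgam') hXi1 hxi hex.
have [_ [hm'K hm'c]] := hm'.
have rg : rho *m invmx gam' = rho.
  by rewrite hg' invmx1 mulmx1 mul1mx mulmxA rho_u (@rho_M m' hm'c hm'K.2).
have rg' : rho *m gam' = rho by rewrite -{1}rg -mulmxA (mulVmx g'U) mulmx1.
have htau : expR (- tau) = 1 :> R.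
  have : expR (- tau) *: rho = rho.
    by rewrite -rho_a -{1}rho_m -mulmxA -hp' -hxi1 mul1mx mulmxA rg' rho_u.
  move/matrixP => /(_ ord0 ord_max); rewrite mxE rhoE iMA eqxx mulrN1.
  by move/eqP; rewrite eqr_opp => /eqP.
have sU : sigma \in unitmx := @G_unit _ hsK.1.
have hsa' : sigma *m a_ t = a_ (- t) *m sigma by rewrite -(hsa t) mulmxKV.
have lhs : rho *m (u_ x *m sigma *m a_ t) *m e_n = expR t *: (rho *m e_n).
  rewrite !mulmxA rho_u -(mulmxA rho sigma (a_ t)) hsa' mulmxA rho_a opprK -!scalemxAl -mulmxA hsK.2.
  done.
have rhs : rho *m (gam *m xi *m u_ y *m a_ s *m k) *m e_n = expR (- s) *: (rho *m e_n).
  have -> : gam *m xi *m u_ y *m a_ s *m k = (gam *m xi) *m (u_ y *m a_ s *m k)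
    by rewrite !mulmxA.
  rewrite mulmxA rho_p htau scale1r !mulmxA rho_u rho_a -!scalemxAl -mulmxA hk.2.
  done.
rewrite heq rhs in lhs.
move/matrixP: lhs => /(_ ord0 ord0); rewrite mxE [in X in _ = X]mxE rho_en !mulrN1 => /eqP.
rewrite eqr_opp => /eqP he.
have h1 : 1 < expR t by rewrite expR_gt1 (lt_trans ltr01 ht).
have h2 : expR (- s) < 1 by rewrite expR_lt1 oppr_lt0 (lt_trans hs0 hs).
by move: h1; rewrite -he => /(lt_trans h2); rewrite ltxx.
Qed.
End S.

Theorem proposition3p1 (R : realType) (n : nat) (hn : (2 <= n)%N)
  (sigma : 'M[R]_(n.+1))
  (hsK : Kset sigma) (hs2 : sigma *m sigma = 1%:M)
  (hsa : forall t : R, sigma *m a_ t *m invmx sigma = a_ (- t))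
  (Gam : set 'M[R]_(n.+1)) (hGsub : is_subgroup Gam) (hGdisc : discrete_mx Gam)
  (hGnc : noncompact_quotient Gam)
  (s0 : R) (eta0 : set 'rV[R]_(n.-1)) (Xi : set 'M[R]_(n.+1))
  (hs0 : 0 < s0) (heta0 : compact eta0)
  (hXi : finite_set Xi) (hXiG : Xi `<=` Gset) (hXi1 : Xi 1%:M)
  (h_i : forall g, Gset g -> exists gam xi w,
      Gam gam /\ Xi xi /\ Omega eta0 s0 w /\ g = gam *m xi *m w)
  (h_ii : forall xi, Xi xi -> exists C : set 'rV[R]_(n.-1), compact C /\
      forall x, exists gam y, Gam gam /\ C y /\
        xi *m u_ x *m invmx xi = gam *m (xi *m u_ y *m invmx xi))
  (h_iii : forall eta : set 'rV[R]_(n.-1), compact eta ->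
      finite_set [set gam | Gam gam /\ exists xi w,
         Xi xi /\ Omega eta s0 w /\ Omega eta s0 (gam *m xi *m w)])
  (h_iv : forall eta : set 'rV[R]_(n.-1), compact eta -> eta0 `<=` eta ->
      exists s1, s0 < s1 /\ forall gam xi1 xi2, Gam gam -> Xi xi1 -> Xi xi2 ->
        (exists w1 w2, Omega eta s0 w1 /\ Omega eta s1 w2 /\
            gam *m xi1 *m w1 = xi2 *m w2) ->
        xi1 = xi2 /\ exists x m, Mset m /\ gam = xi1 *m u_ x *m m *m invmx xi1) :
  exists t0 : R, 0 < t0 /\
    forall (x : 'rV[R]_(n.-1)) (t : R), t0 < t ->
    forall gam xi (y : 'rV[R]_(n.-1)) (s : R) k,
      Gam gam -> Xi xi -> s0 < s -> Kset k ->
      u_ x *m sigma *m a_ t = gam *m xi *m u_ y *m a_ s *m k ->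
      ~ Pset (gam *m xi).
Proof.
exact: (@main_aux R n (ltnW hn) sigma hsK hsa Gam hGsub s0 eta0 Xi hs0 heta0
  hXiG hXi1 h_ii h_iv).
Qed.
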